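(* Let $X$ be a Banach space over $\mathbb{K}$. If there exists a Banach space $Y\neq\{0\}$ over $\mathbb{K}$ such that the pair $(X,Y)$ has the uniform sBPBp, then the pair $(X,\mathbb{K})$ has the uniform sBPBp (with the same function $\eta(\varepsilon)$).
   Context: $\mathbb{K}=\mathbb{R}$ or $\mathbb{C}$. $S_X$ denotes the unit sphere of $X$ and $\mathcal{L}(X,Y)$ the space of bounded linear operators from $X$ to $Y$ with the operator norm; $\mathcal{L}(X,\mathbb{K})=X^*$. A pair of Banach spaces $(X,Y)$ has the uniform strong Bishop–Phelps–Bollobás property (uniform sBPBp) if for every $\varepsilon>0$ there exists $\eta(\varepsilon)>0$ such that whenever $T\in\mathcal{L}(X,Y)$ with $\|T\|=1$ and $x_0\in S_X$ satisfy $\|T(x_0)\|>1-\eta(\varepsilon)$, there exists $x_1\in S_X$ with $\|T(x_1)\|=1$ and $\|x_1-x_0\|<\varepsilon$. *)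

(* Defs.v *)
From Stdlib Require Import Reals.
Open Scope R_scope.

(** Scalar field K = R or C.  C is modelled as R * R. *)
Inductive Kind : Type := KR | KC.

Definition Kt (k : Kind) : Type :=
  match k with KR => R | KC => (R * R)%type end.

Definition K0 (k : Kind) : Kt k :=
  match k return Kt k with KR => 0 | KC => (0, 0) end.
Definition K1 (k : Kind) : Kt k :=
  match k return Kt k with KR => 1 | KC => (1, 0) end.
Definition Kadd (k : Kind) : Kt k -> Kt k -> Kt k :=
  match k return Kt k -> Kt k -> Kt k with
  | KR => Rplus
  | KC => fun a b => (fst a + fst b, snd a + snd b)
  end.
Definition Kopp (k : Kind) : Kt k -> Kt k :=
  match k return Kt k -> Kt k with
  | KR => Ropp
  | KC => fun a => (- fst a, - snd a)
  end.
Definition Kmul (k : Kind) : Kt k -> Kt k -> Kt k :=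
  match k return Kt k -> Kt k -> Kt k with
  | KR => Rmult
  | KC => fun a b => (fst a * fst b - snd a * snd b, fst a * snd b + snd a * fst b)
  end.
Definition Kabs (k : Kind) : Kt k -> R :=
  match k return Kt k -> R with
  | KR => Rabs
  | KC => fun a => sqrt (fst a * fst a + snd a * snd a)
  end.

(** Data of a normed space over K (axioms are in [is_banach]). *)
Record NormedSpace (k : Kind) : Type := {
  carrier :> Type;
  vzero : carrier;
  vadd : carrier -> carrier -> carrier;
  vopp : carrier -> carrier;
  vscal : Kt k -> carrier -> carrier;
  vnorm : carrier -> R
}.
Arguments vzero {k} _.
Arguments vadd {k} {_} _ _.
Arguments vopp {k} {_} _.
Arguments vscal {k} {_} _ _.
Arguments vnorm {k} {_} _.

Definition vsub {k} {V : NormedSpace k} (x y : V) : V := vadd x (vopp y).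

Definition is_banach {k : Kind} (V : NormedSpace k) : Prop :=
  (forall x y z : V, vadd x (vadd y z) = vadd (vadd x y) z) /\
  (forall x y : V, vadd x y = vadd y x) /\
  (forall x : V, vadd x (vzero V) = x) /\
  (forall x : V, vadd x (vopp x) = vzero V) /\
  (forall (a : Kt k) (x y : V), vscal a (vadd x y) = vadd (vscal a x) (vscal a y)) /\
  (forall (a b : Kt k) (x : V), vscal (Kadd k a b) x = vadd (vscal a x) (vscal b x)) /\
  (forall (a b : Kt k) (x : V), vscal (Kmul k a b) x = vscal a (vscal b x)) /\
  (forall x : V, vscal (K1 k) x = x) /\
  (forall x : V, vnorm x = 0 <-> x = vzero V) /\
  (forall (a : Kt k) (x : V), vnorm (vscal a x) = Kabs k a * vnorm x) /\
  (forall x y : V, vnorm (vadd x y) <= vnorm x + vnorm y) /\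
  (forall u : nat -> V,
     (forall eps, eps > 0 -> exists N, forall m n, (N <= m)%nat -> (N <= n)%nat ->
        vnorm (vsub (u m) (u n)) < eps) ->
     exists l : V, forall eps, eps > 0 -> exists N, forall n, (N <= n)%nat ->
        vnorm (vsub (u n) l) < eps).

Definition Kspace (k : Kind) : NormedSpace k :=
  {| carrier := Kt k; vzero := K0 k; vadd := Kadd k; vopp := Kopp k;
     vscal := Kmul k; vnorm := Kabs k |}.

Definition bounded_linear {k} {X Y : NormedSpace k} (T : X -> Y) : Prop :=
  (forall x y : X, T (vadd x y) = vadd (T x) (T y)) /\
  (forall (a : Kt k) (x : X), T (vscal a x) = vscal a (T x)) /\
  (exists M : R, forall x : X, vnorm (T x) <= M * vnorm x).

Definition opnorm_is {k} {X Y : NormedSpace k} (T : X -> Y) (r : R) : Prop :=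
  is_lub (fun s => exists x : X, vnorm x <= 1 /\ s = vnorm (T x)) r.

Definition uniform_sBPBp_with {k} (X Y : NormedSpace k) (eta : R -> R) : Prop :=
  forall eps, eps > 0 ->
    eta eps > 0 /\
    forall (T : X -> Y) (x0 : X),
      bounded_linear T -> opnorm_is T 1 ->
      vnorm x0 = 1 -> vnorm (T x0) > 1 - eta eps ->
      exists x1 : X, vnorm x1 = 1 /\ vnorm (T x1) = 1 /\ vnorm (vsub x1 x0) < eps.

(* Main.v *)
Require Import Defs.
From Stdlib Require Import Reals Lra FunctionalExtensionality PropExtensionality.
Open Scope R_scope.

Definition Kreal (k : Kind) (c : R) : Kt k :=
  match k return Kt k with KR => c | KC => (c, 0) end.

Lemma Kabs_real k c : 0 <= c -> Kabs k (Kreal k c) = c.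
Proof.
  intros H; destruct k; simpl.
  - apply Rabs_pos_eq; auto.
  - replace (c * c + 0 * 0) with (Rsqr c) by (unfold Rsqr; ring).
    apply sqrt_Rsqr; auto.
Qed.

Theorem mainTheorem6 (k : Kind) (X : NormedSpace k) (eta : R -> R) :
  is_banach X ->
  (exists Y : NormedSpace k,
     is_banach Y /\ (exists y : Y, y <> vzero Y) /\ uniform_sBPBp_with X Y eta) ->
  uniform_sBPBp_with X (Kspace k) eta.
Proof.
  intros _ [Y [HY [[y Hy] HU]]].
  destruct HY as [_ [_ [_ [_ [_ [Hadd [Hmul [H1 [Hn0 [Hns [Htri _]]]]]]]]]]].
  assert (Hpos : 0 < vnorm y).
  { assert (E : vadd y (vscal (Kopp k (K1 k)) y) = vzero Y).
    { apply Hn0. rewrite <- (H1 y) at 1. rewrite <- Hadd, Hns.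
      replace (Kabs k (Kadd k (K1 k) (Kopp k (K1 k)))) with 0.
      2:{ destruct k; simpl. - rewrite Rplus_opp_r, Rabs_R0; reflexivity.
          - rewrite <- sqrt_0; f_equal; ring. }
      ring. }
    assert (N0 : vnorm (vzero Y) = 0) by (apply Hn0; reflexivity).
    assert (Hm : Kabs k (Kopp k (K1 k)) = 1).
    { destruct k; simpl. - rewrite Rabs_Ropp, Rabs_R1; reflexivity.
      - transitivity (sqrt 1); [f_equal; ring | apply sqrt_1]. }
    pose proof (Htri y (vscal (Kopp k (K1 k)) y)) as T.
    rewrite E, N0, Hns, Hm in T.
    destruct (Req_dec (vnorm y) 0) as [Z|Z].
    - exfalso; apply Hy, Hn0, Z.
    - lra. }
  set (y0 := vscal (Kreal k (/ vnorm y)) y).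
  assert (Hy0 : vnorm y0 = 1).
  { unfold y0; rewrite Hns, Kabs_real.
    - field; lra.
    - left; apply Rinv_0_lt_compat; lra. }
  intros eps Heps. destruct (HU eps Heps) as [Heta HT]. split; [exact Heta|].
  intros f x0 [fl [fs [M fM]]] Hf Hx0 Hfx0.
  set (T := fun x : X => vscal (f x) y0).
  assert (NT : forall x, vnorm (T x) = vnorm (f x)).
  { intro x; unfold T; rewrite Hns, Hy0; simpl; ring. }
  destruct (HT T x0) as [x1 [A [B C]]].
  - split; [|split].
    + intros a b; unfold T; rewrite fl; apply Hadd.
    + intros a b; unfold T; rewrite fs; apply Hmul.
    + exists M; intro x; rewrite NT; apply fM.
  - unfold opnorm_is in *.
    replace (fun s : R => exists x : X, vnorm x <= 1 /\ s = vnorm (T x))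
      with (fun s : R => exists x : X, vnorm x <= 1 /\ s = vnorm (f x)); auto.
    apply functional_extensionality; intro s.
    apply propositional_extensionality; split; intros [x [P Q]]; exists x;
      rewrite ?NT in *; auto.
  - exact Hx0.
  - rewrite NT; exact Hfx0.
  - exists x1; rewrite <- NT; auto.
Qed.
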